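(* Let $\mathsf G$ be a group having a non-trivial outer automorphism class $[\varphi]\in\mathsf{Out}(\mathsf G)$ such that (1) $[\varphi]^2=[id_{\mathsf G}]$ in $\mathsf{Out}(\mathsf G)$, and (2) for every automorphism $\phi\in[\varphi]$ and every $g\in\mathsf G$ with $\phi^2=c_g$, one has $\phi(g)\neq g$. Then $\mathbb{S}ym(\mathsf G)$ is not split (i.e. $\mathsf G$ is not permutationally split).
   Context: $c_g$ denotes the inner automorphism $h\mapsto ghg^{-1}$; $\mathsf{Out}(\mathsf G)=\mathsf{Aut}(\mathsf G)/\mathsf{Inn}(\mathsf G)$. $\mathsf G$ is regarded as a one-object groupoid, and $\mathbb{S}ym(\mathsf G)$ is the 2-group of self-equivalences of this groupoid and natural isomorphisms, with tensor product composition (equivalently: objects the automorphisms $\phi$ of $\mathsf G$, morphisms $\phi\to\tilde\phi$ the elements $g$ with $\tilde\phi=c_g\circ\phi$). A 2-group is split if it is equivalent (monoidal functor with pseudo-inverse up to monoidal natural isomorphism) to an elementary 2-group $\mathsf A[1]\rtimes\mathsf H[0]$ for some group $\mathsf H$ and left $\mathsf H$-module $\mathsf A$: the strict 2-group with objects the elements of $\mathsf H$, morphisms $(a,h):h\to h$, composition $(a',h)\circ(a,h)=(a'+a,h)$, tensor $h\otimes h'=hh'$, $(a,h)\otimes(a',h')=(a+h\lhd a',hh')$. $\mathsf G$ is permutationally split if $\mathbb{S}ym(\mathsf G)$ is split. *)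

(* Defs.v *)
From Stdlib Require Import Utf8 Setoid.
Set Implicit Arguments.
Unset Strict Implicit.

Record group := Group {
  gcar :> Type;
  gmul : gcar -> gcar -> gcar;
  gone : gcar;
  ginv : gcar -> gcar;
  gmulA : forall x y z, gmul x (gmul y z) = gmul (gmul x y) z;
  gmul1l : forall x, gmul gone x = x;
  gmulVl : forall x, gmul (ginv x) x = gone
}.
Arguments gmul {g}. Arguments gone {g}. Arguments ginv {g}.

Section GroupFacts.
Variable G : group.
Lemma gmulVr (x : G) : gmul x (ginv x) = gone.
Proof.
  rewrite <- (gmul1l (gmul x (ginv x))).
  rewrite <- (gmulVl (ginv x)) at 1.
  rewrite <- gmulA, (gmulA (ginv x)), gmulVl, gmul1l. apply gmulVl.
Qed.
Lemma gmul1r (x : G) : gmul x gone = x.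
Proof. rewrite <- (gmulVl x), gmulA, gmulVr. apply gmul1l. Qed.
End GroupFacts.

Definition conj (G : group) (g x : G) : G := gmul (gmul g x) (ginv g).

Definition is_aut (G : group) (f : G -> G) : Prop :=
  (forall x y, f (gmul x y) = gmul (f x) (f y)) /\
  exists f' : G -> G, (forall x, f' (f x) = x) /\ (forall x, f (f' x) = x).

Lemma conj_mul (G : group) (g x y : G) :
  conj g (gmul x y) = gmul (conj g x) (conj g y).
Proof.
  unfold conj. rewrite !gmulA.
  rewrite <- (gmulA (gmul g x) (ginv g) g), gmulVl, gmul1r. reflexivity.
Qed.

Lemma conj_inv (G : group) (g x : G) : conj (ginv g) (conj g x) = x.
Proof.
  unfold conj. rewrite !gmulA, gmulVl, gmul1l.
  rewrite <- (gmulA x (ginv g) (ginv (ginv g))), gmulVr. apply gmul1r.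
Qed.

Lemma inv_inv (G : group) (g : G) : ginv (ginv g) = g.
Proof.
  rewrite <- (gmul1r (ginv (ginv g))), <- (gmulVl g), gmulA, gmulVl. apply gmul1l.
Qed.

Lemma comp_aut (G : group) (f h : G -> G) :
  is_aut f -> is_aut h -> is_aut (fun x => f (h x)).
Proof.
  intros [Hf [f' [Hf1 Hf2]]] [Hh [h' [Hh1 Hh2]]]. split.
  - intros x y. rewrite Hh. apply Hf.
  - exists (fun x => h' (f' x)). split; intros x.
    + rewrite Hf1. apply Hh1.
    + rewrite Hh2. apply Hf2.
Qed.

Lemma conj_aut (G : group) (g : G) : is_aut (conj g).
Proof.
  split. apply conj_mul. exists (conj (ginv g)). split; intros x.
  apply conj_inv. rewrite <- (inv_inv g) at 1. apply conj_inv.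
Qed.

Lemma id_aut (G : group) : is_aut (fun x : G => x).
Proof. split. reflexivity. exists (fun x => x). split; reflexivity. Qed.

Record hmod (H : group) := HMod {
  mcar :> Type;
  madd : mcar -> mcar -> mcar;
  mzero : mcar;
  mopp : mcar -> mcar;
  maddA : forall a b c, madd a (madd b c) = madd (madd a b) c;
  maddC : forall a b, madd a b = madd b a;
  madd0l : forall a, madd mzero a = a;
  maddNl : forall a, madd (mopp a) a = mzero;
  mact : H -> mcar -> mcar;
  mact1 : forall a, mact gone a = a;
  mactM : forall h k a, mact (gmul h k) a = mact h (mact k a);
  mactD : forall h a b, mact h (madd a b) = madd (mact h a) (mact h b)
}.
Arguments madd {H} {_}. Arguments mzero {H} {_}. Arguments mact {H} {_}.

(** * Strict 2-groups, presented with a "flat" type of morphisms: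
    every element m of Mor is a morphism src m -> tgt m;
    cmp m n is the composite m o n (meaningful when src m = tgt n);
    tno / tnm are the tensor product on objects / morphisms; unit is the
    tensor unit.  Associativity and unit laws hold strictly (as Leibniz
    equalities) in the two instances below. *)
Record s2data := S2 {
  Ob : Type;
  Mor : Type;
  src : Mor -> Ob;
  tgt : Mor -> Ob;
  idm : Ob -> Mor;
  cmp : Mor -> Mor -> Mor;
  tno : Ob -> Ob -> Ob;
  tnm : Mor -> Mor -> Mor;
  unit : Ob
}.
Arguments src {s}. Arguments tgt {s}. Arguments idm {s}. Arguments cmp {s}.
Arguments tno {s}. Arguments tnm {s}. Arguments unit s : clear implicits.

(** The 2-group Sym(G): objects the automorphisms phi of G, a morphism
    (g, phi) : phi -> c_g o phi; composition (g, c_h o phi) o (h, phi) =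
    (g h, phi); tensor = composition of automorphisms,
    (g,phi) (x) (h,psi) = (g phi(h), phi o psi). *)
Definition AutG (G : group) := { f : G -> G | is_aut f }.

Definition aut_comp (G : group) (f h : AutG G) : AutG G :=
  exist _ (fun x => proj1_sig f (proj1_sig h x))
        (comp_aut (proj2_sig f) (proj2_sig h)).

Definition aut_conj (G : group) (g : G) : AutG G := exist _ (conj g) (conj_aut g).

Definition aut_id (G : group) : AutG G := exist _ (fun x => x) (id_aut G).

Definition Sym (G : group) : s2data := {|
  Ob := AutG G;
  Mor := (G * AutG G)%type;
  src := fun m => snd m;
  tgt := fun m => aut_comp (aut_conj (fst m)) (snd m);
  idm := fun f => (gone, f);
  cmp := fun m n => (gmul (fst m) (fst n), snd n);
  tno := @aut_comp G;
  tnm := fun m n => (gmul (fst m) (proj1_sig (snd m) (fst n)),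
                     aut_comp (snd m) (snd n));
  unit := aut_id G
|}.

Definition Elem (H : group) (A : hmod H) : s2data := {|
  Ob := gcar H;
  Mor := (A * H)%type;
  src := fun m => snd m;
  tgt := fun m => snd m;
  idm := fun h => (mzero, h);
  cmp := fun m n => (madd (fst m) (fst n), snd n);
  tno := @gmul H;
  tnm := fun m n => (madd (fst m) (mact (snd m) (fst n)), gmul (snd m) (snd n));
  unit := @gone H
|}.

Record mfdata (C D : s2data) := MF {
  F0 : Ob C -> Ob D;
  F1 : Mor C -> Mor D;
  fmu : Ob C -> Ob C -> Mor D;   (* F x (x) F y -> F (x (x) y) *)
  feps : Mor D                   (* I -> F I *)
}.
Arguments F0 {C D}. Arguments F1 {C D}. Arguments fmu {C D}. Arguments feps {C D}.

Definition is_monfun (C D : s2data) (F : mfdata C D) : Prop :=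
  (forall f, src (F1 F f) = F0 F (src f) /\ tgt (F1 F f) = F0 F (tgt f)) /\
  (forall x, F1 F (idm x) = idm (F0 F x)) /\
  (forall f g, src f = tgt g -> F1 F (cmp f g) = cmp (F1 F f) (F1 F g)) /\
  (forall x y, src (fmu F x y) = tno (F0 F x) (F0 F y) /\
               tgt (fmu F x y) = F0 F (tno x y)) /\
  (src (feps F) = unit D /\ tgt (feps F) = F0 F (unit C)) /\
  (forall f g, cmp (fmu F (tgt f) (tgt g)) (tnm (F1 F f) (F1 F g)) =
               cmp (F1 F (tnm f g)) (fmu F (src f) (src g))) /\
  (forall x y z,
      cmp (fmu F (tno x y) z) (tnm (fmu F x y) (idm (F0 F z))) =
      cmp (fmu F x (tno y z)) (tnm (idm (F0 F x)) (fmu F y z))) /\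
  (forall x, cmp (fmu F (unit C) x) (tnm (feps F) (idm (F0 F x))) = idm (F0 F x)) /\
  (forall x, cmp (fmu F x (unit C)) (tnm (idm (F0 F x)) (feps F)) = idm (F0 F x)).

(** Monoidal natural transformation theta : F => F'.  All morphisms of a
    2-group are invertible, so these are monoidal natural isomorphisms. *)
Definition is_monnat (C D : s2data) (F F' : mfdata C D) (theta : Ob C -> Mor D) : Prop :=
  (forall x, src (theta x) = F0 F x /\ tgt (theta x) = F0 F' x) /\
  (forall f, cmp (theta (tgt f)) (F1 F f) = cmp (F1 F' f) (theta (src f))) /\
  (forall x y, cmp (theta (tno x y)) (fmu F x y) =
               cmp (fmu F' x y) (tnm (theta x) (theta y))) /\
  cmp (theta (unit C)) (feps F) = feps F'.

Definition mf_comp (C D E : s2data) (F : mfdata C D) (G : mfdata D E) : mfdata C E :=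
  {| F0 := fun x => F0 G (F0 F x);
     F1 := fun f => F1 G (F1 F f);
     fmu := fun x y => cmp (F1 G (fmu F x y)) (fmu G (F0 F x) (F0 F y));
     feps := cmp (F1 G (feps F)) (feps G) |}.

Definition mf_id (C : s2data) : mfdata C C :=
  {| F0 := fun x => x; F1 := fun f => f;
     fmu := fun x y => idm (tno x y); feps := idm (unit C) |}.

Definition mon_equivalent (C D : s2data) : Prop :=
  exists (F : mfdata C D) (G : mfdata D C) (eta : Ob C -> Mor C) (eps : Ob D -> Mor D),
    is_monfun F /\ is_monfun G /\
    is_monnat (mf_comp F G) (mf_id C) eta /\
    is_monnat (mf_comp G F) (mf_id D) eps.

Definition split2 (C : s2data) : Prop :=
  exists (H : group) (A : hmod H), mon_equivalent C (Elem A).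

Definition permutationally_split (G : group) : Prop := split2 (Sym G).

(* Main.v *)
Require Import Defs.
From Stdlib Require Import ProofIrrelevance FunctionalExtensionality.

Section Alg.
Variable G : group.
Lemma cancel_l (x y z : G) : gmul x y = gmul x z -> y = z.
Proof.
  intro E. rewrite <- (gmul1l y), <- (gmul1l z), <- (gmulVl x), <- !gmulA, E. reflexivity.
Qed.
Lemma inv_uniq (x y : G) : gmul y x = gone -> y = ginv x.
Proof.
  intro E. rewrite <- (gmul1r y), <- (gmulVr x), gmulA, E. apply gmul1l.
Qed.
Lemma ginv_mul (x y : G) : ginv (gmul x y) = gmul (ginv y) (ginv x).
Proof.
  symmetry. apply inv_uniq. rewrite <- gmulA, (gmulA (ginv x)), gmulVl, gmul1l. apply gmulVl.
Qed.
Lemma aut_one (f : G -> G) : is_aut f -> f gone = gone.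
Proof.
  intros [Hm _]. apply (cancel_l (f gone)). rewrite <- Hm, gmul1l, gmul1r. reflexivity.
Qed.
Lemma aut_inv (f : G -> G) (x : G) : is_aut f -> f (ginv x) = ginv (f x).
Proof.
  intros Ha. apply inv_uniq. rewrite <- (proj1 Ha), gmulVl. apply aut_one, Ha.
Qed.
Lemma conj_comp (x y z : G) : conj (gmul x y) z = conj x (conj y z).
Proof.
  unfold conj. rewrite ginv_mul, !gmulA. reflexivity.
Qed.
Lemma autG_eq (f h : AutG G) : (forall x, proj1_sig f x = proj1_sig h x) -> f = h.
Proof.
  destruct f as [f pf], h as [h ph]; simpl; intros E.
  assert (f = h) by (apply functional_extensionality; exact E). subst.
  f_equal. apply proof_irrelevance.
Qed.
End Alg.

Theorem corollary4p23 (G : group) (phi : G -> G) (Hphi : is_aut phi)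
  (Hnontriv : ~ exists g : G, forall x, phi x = conj g x)
  (Hsq : exists g : G, forall x, phi (phi x) = conj g x)
  (Hfix : forall psi : G -> G, is_aut psi ->
            (exists h : G, forall x, psi x = conj h (phi x)) ->
            forall g : G, (forall x, psi (psi x) = conj g x) -> psi g <> g) :
  ~ permutationally_split G.
Proof.
  intros [H [A [F [G' [eta [eps [HF [HG [Heta _]]]]]]]]].
  destruct Hsq as [g0 Hg0].
  set (Phi := exist _ phi Hphi : AutG G).
  destruct HF as [F1 [F2 [F3 [F4 [[F5a F5b] _]]]]].
  set (h := F0 F Phi).
  assert (Hhh : gmul h h = gone).
  { destruct (F1 (g0, aut_id G)) as [Ea Eb]. simpl in Ea, Eb.
    rewrite Ea in Eb.
    assert (E1 : aut_comp (aut_conj g0) (aut_id G) = aut_comp Phi Phi)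
      by (apply autG_eq; intro x; simpl; symmetry; apply Hg0).
    rewrite E1 in Eb.
    destruct (F4 Phi Phi) as [Ma Mb]. simpl in Ma, Mb. rewrite Ma in Mb.
    simpl in F5a, F5b. rewrite F5a in F5b.
    unfold h. rewrite Mb, <- Eb, <- F5b. reflexivity. }
  destruct HG as [_ [_ [_ [G4 [[G5a G5b] [_ [G7 [G8 G9]]]]]]]].
  set (Psi := F0 G' h).
  set (psi := proj1_sig Psi).
  assert (Hpsi : is_aut psi) by (exact (proj2_sig Psi)).
  destruct Heta as [Ea _].
  assert (Hcls : exists k, forall x, psi x = conj k (phi x)).
  { destruct (Ea Phi) as [E1 E2]. simpl in E1, E2.
    exists (ginv (fst (eta Phi))). intro x.
    pose proof (f_equal (fun f => proj1_sig f x) E2) as E3. simpl in E3.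
    rewrite E1 in E3. rewrite <- E3. symmetry. apply conj_inv. }
  set (a := fst (fmu G' h h)). set (e := fst (feps G')).
  assert (Hsq' : forall x, psi (psi x) = conj (gmul (ginv a) e) x).
  { intro x. destruct (G4 h h) as [Ma Mb]. simpl in Ma, Mb, G5a, G5b.
    rewrite Hhh in Mb. rewrite Ma in Mb. rewrite G5a in G5b.
    rewrite <- G5b in Mb.
    pose proof (f_equal (fun f => proj1_sig f x) Mb) as E3. simpl in E3.
    fold a in E3. fold e in E3. fold Psi in E3. fold psi in E3.
    rewrite conj_comp, <- E3. symmetry. apply conj_inv. }
  apply (Hfix psi Hpsi Hcls _ Hsq').
  pose proof (f_equal fst (G8 h)) as L. simpl in L.
  pose proof (f_equal fst (G9 h)) as R. simpl in R.
  pose proof (f_equal fst (G7 h h h)) as S. simpl in S.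
  rewrite Hhh in S.
  fold Psi psi a e in L, R, S.
  rewrite (@aut_one G _ (proj2_sig (snd (feps G')))), gmul1r in L.
  rewrite gmul1l in R.
  rewrite (@aut_one G _ (proj2_sig (snd (fmu G' h h)))), gmul1r, gmul1l in S.
  apply inv_uniq in L. apply inv_uniq in R. rewrite L, R in S.
  rewrite <- (@aut_inv G _ _ Hpsi), <- (proj1 Hpsi) in S.
  assert (Eg : gmul (ginv a) e = ginv (gmul (ginv e) a))
    by (rewrite ginv_mul, inv_inv; reflexivity).
  rewrite Eg, (@aut_inv G _ _ Hpsi), <- S. reflexivity.
Qed.
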